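(* Let $N, N_y, M, p \in \mathbb{N}$ with $p\le N$, $X \in \mathbb{R}^{N \times M}$, $Y \in \mathbb{R}^{N_y \times M}$, $\lambda \ge 0$, $\Omega=\{1,\dots,N\}$, let $\bar S_0\subset\cdots\subset\bar S_p$ with feasible sets $\mathcal{I}_1,\dots,\mathcal{I}_p$ be a greedy sequence, and let $\xi^{(k)},\theta^{(k)},\Xi^{(k)},\Theta^{(k)}$ be defined as in the context. Let $f_i^{(k)} := \|(Q^{xy}_i(\bar S_k))^\top\|^2$ and $g_i^{(k)} := Q^{xx}_{i,i}(\bar S_k)$. Then for any $k\in\{1,\dots,p\}$ and $i \in \mathcal{I}_k$, \begin{align*} f_i^{(k)} &= f_i^{(k-1)} - \xi^{(k)}_i\Bigl(2X_iY^\top\theta^{(k)} - 2\,\Xi^{(k-1)}_i \Theta^{(k-1)\top}\theta^{(k)} - \|\theta^{(k)}\|^2 \xi^{(k)}_i\Bigr),\\ g_i^{(k)} &= g_i^{(k-1)} - \xi^{(k)}_i\xi^{(k)}_i. \end{align*}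
   Context: Notation: for a matrix $A$ and an ordered index set $S$, $A_S$ is the submatrix of rows indexed by $S$, $A_{S,S}$ the principal submatrix; $A_i$ is row $i$ of $A$, $A_{i,i}$ its $(i,i)$ entry; $v_i$ is the $i$th component of vector $v$; $\|\cdot\|$ is the Euclidean norm; $(I_N)_s^\top$ is the $s$th canonical unit vector. $P^{xx} = XX^\top + \lambda I_N$, $P^{xy} = XY^\top$. $Q^{xx}(\emptyset)=P^{xx}$, $Q^{xy}(\emptyset)=P^{xy}$, and for $|S|\ge1$ with $P^{xx}_{S,S}\succ0$: $Q^{xx}(S) = P^{xx} - (P^{xx}_S)^\top (P^{xx}_{S,S})^{-1} P^{xx}_S$, $Q^{xy}(S) = P^{xy} - (P^{xx}_S)^\top (P^{xx}_{S,S})^{-1} P^{xy}_S$. $J(S) = \operatorname{tr}\{ Y X_S^\top (X_S X_S^\top + \lambda I_{|S|})^{-1} X_S Y^\top \}$ for feasible $S$, $J(\emptyset)=0$. Greedy sequence: $\bar S_0=\emptyset$; for $k=1,\dots,p$, $\mathcal{I}_k = \{ i\in\Omega\setminus\bar S_{k-1} : P^{xx}_{S',S'}\succ0,\ S'=\bar S_{k-1}\cup\{i\}\}$ (assumed nonempty), $\bar s_k \in \arg\max_{i\in\mathcal{I}_k}\{J(\bar S_{k-1}\cup\{i\}) - J(\bar S_{k-1})\}$, $\bar S_k = \bar S_{k-1}\cup\{\bar s_k\}$. Recursion, starting from empty $\Xi^{(0)}\in\mathbb{R}^{N\times0}$, $\Theta^{(0)}\in\mathbb{R}^{N_y\times0}$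 (products with them equal to zero): $\delta^{(k)} = X X_{\bar s_k}^\top + \lambda (I_N)_{\bar s_k}^\top - \Xi^{(k-1)}(\Xi^{(k-1)}_{\bar s_k})^\top$, $\xi^{(k)} = \delta^{(k)}/\sqrt{\delta^{(k)}_{\bar s_k}}$, $\theta^{(k)} = (Y X_{\bar s_k}^\top - \Theta^{(k-1)}(\Xi^{(k-1)}_{\bar s_k})^\top)/\sqrt{\delta^{(k)}_{\bar s_k}}$, $\Xi^{(k)}=[\Xi^{(k-1)},\xi^{(k)}]$, $\Theta^{(k)}=[\Theta^{(k-1)},\theta^{(k)}]$. *)

(* Defs.v *)
From mathcomp Require Import all_boot all_order all_algebra.
Set Implicit Arguments. Unset Strict Implicit. Unset Printing Implicit Defensive.
Import Order.TTheory GRing.Theory Num.Theory.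
Local Open Scope ring_scope.

Section Greedy.
Variables (R : rcfType) (N Ny M : nat).
Variables (X : 'M[R]_(N, M)) (Y : 'M[R]_(Ny, M)) (lam : R).

Definition posdef n (A : 'M[R]_n) : Prop :=
  A^T = A /\ forall v : 'cV[R]_n, v != 0 -> 0 < (v^T *m A *m v) 0 0.

Definition Pxx : 'M[R]_N := X *m X^T + lam%:M.
Definition Pxy : 'M[R]_(N, Ny) := X *m Y^T.

(* Ordered index sets S are sequences of indices; A_S = rows of A indexed by S,
   A_{S,S} = principal submatrix. *)
Definition subrows m (S : seq 'I_N) (A : 'M[R]_(N, m)) : 'M[R]_(size S, m) :=
  rowsub (tnth (in_tuple S)) A.
Definition subprinc (S : seq 'I_N) (A : 'M[R]_N) : 'M[R]_(size S) :=
  mxsub (tnth (in_tuple S)) (tnth (in_tuple S)) A.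

(* For S = [::] the formula reduces to Q(emptyset) = P (empty products are 0). *)
Definition Qxx (S : seq 'I_N) : 'M[R]_N :=
  Pxx - (subrows S Pxx)^T *m invmx (subprinc S Pxx) *m subrows S Pxx.
Definition Qxy (S : seq 'I_N) : 'M[R]_(N, Ny) :=
  Pxy - (subrows S Pxx)^T *m invmx (subprinc S Pxx) *m subrows S Pxy.

Definition J (S : seq 'I_N) : R :=
  \tr (Y *m (subrows S X)^T
         *m invmx (subrows S X *m (subrows S X)^T + lam%:M)
         *m subrows S X *m Y^T).

(* i is in the feasible set I_k when S = \bar S_{k-1}. *)
Definition feasible (S : seq 'I_N) (i : 'I_N) : Prop :=
  i \notin S /\ posdef (subprinc (rcons S i) Pxx).

(* Greedy sequence: s = (\bar s_1, ..., \bar s_p); \bar S_k = take k s. *)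
Definition greedy p (s : p.-tuple 'I_N) : Prop :=
  forall k : 'I_p,
    feasible (take k s) (tnth s k) /\
    forall i, feasible (take k s) i ->
      J (rcons (take k s) i) - J (take k s)
        <= J (rcons (take k s) (tnth s k)) - J (take k s).

(* One step of the recursion: from Xi^(k-1), Theta^(k-1) and \bar s_k,
   compute (xi^(k), theta^(k)). *)
Definition xi_theta n (Xi : 'M[R]_(N, n)) (Th : 'M[R]_(Ny, n)) (a : 'I_N)
  : 'cV[R]_N * 'cV[R]_Ny :=
  let delta := X *m (row a X)^T + lam *: col a (1%:M : 'M[R]_N)
               - Xi *m (row a Xi)^T in
  let c := Num.sqrt (delta a 0) in
  (c^-1 *: delta, c^-1 *: (Y *m (row a X)^T - Th *m (row a Xi)^T)).

(* Build (Xi, Theta) from the reversed sequence of selected indices;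
   Xi^(k) = [Xi^(k-1), xi^(k)]. *)
Fixpoint XTrev (r : seq 'I_N) : 'M[R]_(N, size r) * 'M[R]_(Ny, size r) :=
  match r return 'M[R]_(N, size r) * 'M[R]_(Ny, size r) with
  | [::] => (0, 0)
  | a :: r' =>
      let XT := XTrev r' in
      let xt := xi_theta XT.1 XT.2 a in
      (castmx (erefl N, addn1 (size r')) (row_mx XT.1 xt.1),
       castmx (erefl Ny, addn1 (size r')) (row_mx XT.2 xt.2))
  end.

Definition XiTh (S : seq 'I_N) : 'M[R]_(N, size S) * 'M[R]_(Ny, size S) :=
  ((castmx (erefl N, size_rev S) (XTrev (rev S)).1),
   (castmx (erefl Ny, size_rev S) (XTrev (rev S)).2)).

Definition sqnorm m (v : 'cV[R]_m) : R := \sum_(j < m) v j 0 ^+ 2.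

Definition fval (S : seq 'I_N) (i : 'I_N) : R := sqnorm (row i (Qxy S))^T.
Definition gval (S : seq 'I_N) (i : 'I_N) : R := Qxx S i i.

End Greedy.

(* Main.v *)
Require Import Defs.
From mathcomp Require Import all_boot all_order all_algebra.
From mathcomp Require Import ring lra.
Set Implicit Arguments. Unset Strict Implicit. Unset Printing Implicit Defensive.
Import Order.TTheory GRing.Theory Num.Theory.
Local Open Scope ring_scope.

Section Gen.
Variables (R : rcfType) (N : nat).

Lemma posdef_unit n (A : 'M[R]_n) : posdef A -> A \in unitmx.
Proof.
case=> AT Ap; rewrite unitmxE unitfE; apply/negP => /det0P [v vn0 vA].
have : v^T != 0 by rewrite trmx_eq0.
move=> /Ap; rewrite trmxK vA mul0mx mxE lt_def eqxx.
done.
Qed.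

Lemma posdef0 (A : 'M[R]_0) : posdef A.
Proof. split; first by apply/matrixP => -[].
by move=> v; rewrite [v]flatmx0 eqxx. Qed.

Definition Proj (P : 'M[R]_N) n (E : 'M[R]_(N, n)) :=
  locked (E *m invmx (E^T *m P *m E) *m E^T).

Lemma ProjE (P : 'M[R]_N) n (E : 'M[R]_(N, n)) :
  Proj P E = E *m invmx (E^T *m P *m E) *m E^T.
Proof. by rewrite /Proj -lock. Qed.

Lemma ProjT (P : 'M[R]_N) n (E : 'M[R]_(N, n)) : P^T = P -> (Proj P E)^T = Proj P E.
Proof.
move=> PT; rewrite ProjE !trmx_mul trmxK trmx_inv !trmx_mul trmxK PT !mulmxA.
done.
Qed.

Lemma ProjPE (P : 'M[R]_N) n (E : 'M[R]_(N, n)) :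
  E^T *m P *m E \in unitmx -> Proj P E *m P *m E = E.
Proof.
move=> U; rewrite ProjE -!mulmxA.
have -> : E^T *m (P *m E) = E^T *m P *m E by rewrite mulmxA.
rewrite -mulmxA mulVmx; [exact: mulmx1 | by rewrite mulmxA].
Qed.

Lemma ProjPEl (P : 'M[R]_N) n k (E : 'M[R]_(N, n)) (Z : 'M[R]_(k, N)) :
  E^T *m P *m E \in unitmx -> Z *m Proj P E *m P *m E = Z *m E.
Proof. by move=> U; rewrite -[in RHS](ProjPE U) !mulmxA. Qed.


Lemma proj_update n m (P : 'M[R]_N) (E : 'M_(N,n)) (E' : 'M_(N,m)) (K : 'M_(m,n))
  (A : 'M_(n,m)) (b : 'rV_m) (c : 'cV_m) (ea : 'cV_N) :
  P^T = P -> E = E' *m K -> ea = E' *m c -> E' = E *m A + ea *m b ->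
  E^T *m P *m E \in unitmx -> posdef (E'^T *m P *m E') ->
  c - K *m (invmx (E^T *m P *m E) *m E^T *m P *m ea) != 0 ->
  let w := ea - Proj P E *m P *m ea in
  let d := (w^T *m P *m w) 0 0 in
  [/\ 0 < d, w^T *m P *m w = w^T *m P *m ea &
      Proj P E' = Proj P E + d^-1 *: (w *m w^T)].
Proof.
move=> PT EE eaE E'E U PD vn0 w d.
set C := E^T *m P *m E.
set y := invmx C *m E^T *m P *m ea.
set v := c - K *m y.
have Ev : E' *m v = w.
  by rewrite /v /w mulmxBr -eaE mulmxA -EE /y ProjE !mulmxA.
have wPE : w^T *m P *m E = 0.
  rewrite /w linearB /= trmx_mul trmx_mul PT ProjT // mulmxBl mulmxBl.
  by rewrite !mulmxA ProjPEl // subrr.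
have wPw : w^T *m P *m w = w^T *m P *m ea.
  rewrite {2}/w mulmxBr ProjE !mulmxA wPE !mul0mx subr0 //.
have dpos : 0 < d.
  case: PD => _ /(_ v vn0); rewrite /d -Ev trmx_mul !mulmxA //.
split => //.
have wE : w = ea - Proj P E *m P *m ea by rewrite /w.
have dE : d = (w^T *m P *m w) 0 0 by [].
clearbody d w.
have dn0 : d != 0 by rewrite gt_eqF.
set Z := Proj P E + d^-1 *: (w *m w^T).
have wPea : w^T *m P *m ea = d%:M by rewrite -wPw dE -mx11_scalar.
have M1 : (P - P *m Z *m P) *m E = 0.
  have wPEl k (Z0 : 'M_(k, 1)) : Z0 *m w^T *m P *m E = 0.
    by rewrite -!mulmxA (mulmxA w^T) wPE mulmx0.
  rewrite /Z !(mulmxDl, mulmxDr, mulmxBl, mulmxBr, opprD, mulNmx) -?(scalemxAl, scalemxAr) !mulmxA.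
  by rewrite ProjPEl // wPEl scaler0 subr0 addrN.
have M2 : (P - P *m Z *m P) *m ea = 0.
  have wPeal k (Z0 : 'M_(k, 1)) : Z0 *m w^T *m P *m ea = d *: Z0.
    by rewrite -!mulmxA (mulmxA w^T) wPea mul_mx_scalar.
  rewrite /Z !(mulmxDl, mulmxDr, mulmxBl, mulmxBr, opprD, mulNmx) -?(scalemxAl, scalemxAr) !mulmxA.
  rewrite wPeal scalerA mulVf // scale1r.
  by rewrite wE mulmxBr !mulmxA opprB addKr addrN.
have M3 : (P - P *m Z *m P) *m E' = 0.
  by rewrite E'E mulmxDr !mulmxA M1 M2 !mul0mx addr0.
set W := K *m invmx C *m K^T + d^-1 *: (v *m v^T).
have ZW : Z = E' *m W *m E'^T.
  rewrite /Z /W mulmxDr mulmxDl ProjE -scalemxAr -scalemxAl -Ev -/C EE.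
  by rewrite !trmx_mul !mulmxA.
have CW : E'^T *m P *m E' *m W *m (E'^T *m P *m E') = E'^T *m P *m E'.
  apply/eqP; rewrite eq_sym -subr_eq0; apply/eqP.
  have -> : E'^T *m P *m E' *m W *m (E'^T *m P *m E') = E'^T *m (P *m Z *m P) *m E'.
    by rewrite ZW !mulmxA.
  by rewrite -mulmxBl -mulmxBr -mulmxA M3 mulmx0.
have U' := posdef_unit PD.
have Winv : W = invmx (E'^T *m P *m E').
  rewrite -[W]mul1mx -(mulVmx U') -[_ *m W]mulmx1 -(mulmxV U').
  set C' := E'^T *m P *m E'.
  rewrite mulmxA -(mulmxA (invmx C')) -(mulmxA (invmx C')) CW.
  by rewrite mulVmx // mul1mx.
by rewrite ZW ProjE Winv.
Qed.
End Gen.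

Section Conc.
Variables (R : rcfType) (N Ny M : nat) (X : 'M[R]_(N, M)) (Y : 'M[R]_(Ny, M)) (lam : R).
Local Notation P := (Pxx X lam).

Lemma PxxT : P^T = P.
Proof. by rewrite /Pxx linearD /= trmx_mul trmxK tr_scalar_mx. Qed.

Definition sel (S : seq 'I_N) : 'M[R]_(N, size S) := colsub (tnth (in_tuple S)) 1%:M.

Lemma selT S : (sel S)^T = rowsub (tnth (in_tuple S)) 1%:M.
Proof. by apply/matrixP => i j; rewrite !mxE eq_sym. Qed.

Lemma subrowsE m S (A : 'M[R]_(N, m)) : subrows S A = (sel S)^T *m A.
Proof. by rewrite selT /subrows rowsubE. Qed.

Lemma subprincE S (A : 'M[R]_N) : subprinc S A = (sel S)^T *m A *m sel S.
Proof.
rewrite /subprinc mxsubcr -[rowsub _ A]/(subrows S A) subrowsE.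
by rewrite -[_ *m A]mulmx1 -mulmx_colsub mulmx1.
Qed.

Lemma QxxE S : Qxx X lam S = P - P *m Proj P (sel S) *m P.
Proof. by rewrite /Qxx !subrowsE subprincE ProjE trmx_mul PxxT trmxK !mulmxA. Qed.

Lemma QxyE S : Qxy X Y lam S = Pxy X Y - P *m Proj P (sel S) *m Pxy X Y.
Proof. by rewrite /Qxy !subrowsE subprincE ProjE trmx_mul PxxT trmxK !mulmxA. Qed.

Lemma Q_update S a : subprinc S P \in unitmx -> posdef (subprinc (rcons S a) P) ->
  let q := col a (Qxx X lam S) in
  [/\ 0 < q a 0, Qxx X lam (rcons S a) = Qxx X lam S - (q a 0)^-1 *: (q *m q^T)
   & Qxy X Y lam (rcons S a) = Qxy X Y lam S - (q a 0)^-1 *: (q *m row a (Qxy X Y lam S))].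
Proof.
move=> U PD q.
set S' := rcons S a.
have hm : (size S < size S')%N by rewrite size_rcons.
pose wi (j : 'I_(size S)) : 'I_(size S') := widen_ord (ltnW hm) j.
pose li : 'I_(size S') := Ordinal hm.
have tw j : tnth (in_tuple S') (wi j) = tnth (in_tuple S) j.
  by rewrite !(tnth_nth a) /= nth_rcons ltn_ord.
have tl : tnth (in_tuple S') li = a by rewrite (tnth_nth a) /= nth_rcons ltnn eqxx.
pose K := colsub wi (1%:M : 'M[R]_(size S')).
pose ea := delta_mx a 0 : 'cV[R]_N.
pose c := delta_mx li 0 : 'cV[R]_(size S').
have EE : sel S = sel S' *m K.
  rewrite /K mulmx_colsub mulmx1 /sel -colsub_comp; apply: eq_colsub => j /=.
  by rewrite tw.
have eaE : ea = sel S' *m c.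
  by rewrite /c -colE; apply/matrixP => i j; rewrite !mxE tl (ord1 j) eqxx andbT.
have E'E : sel S' = sel S *m K^T + ea *m c^T.
  apply/matrixP => i j; rewrite !mxE big_ord1 !mxE.
  under eq_bigr do rewrite !mxE.
  have [jl | jnl] := eqVneq j li.
    rewrite big1 => [|k _]; last first.
      suff -> : (j == wi k) = false by rewrite mulr0.
      by apply/negbTE; rewrite jl -val_eqE /= neq_ltn ltn_ord orbT.
    by rewrite jl tl !eqxx add0r andbT mulr1.
  have jlt : (j < size S)%N.
    have e : size S' = (size S).+1 by rewrite size_rcons.
    have h1 := ltn_ord j; rewrite [X in (_ < X)%N]e ltnS leq_eqVlt in h1.
    case/orP: h1 => // /eqP h1; case/eqP: jnl; exact: val_inj.
  have -> : j = wi (Ordinal jlt) by apply: val_inj.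
  rewrite (bigD1 (Ordinal jlt)) //= big1 => [|k kn]; last first.
    suff -> : (wi (Ordinal jlt) == wi k) = false by rewrite mulr0.
    by apply/negbTE; move: kn; rewrite -!val_eqE /= eq_sym.
  rewrite tw eqxx mulr1 addr0.
  by rewrite mulr0 addr0.
have Uc : (sel S)^T *m P *m sel S \in unitmx by rewrite -subprincE.
have PD' : posdef ((sel S')^T *m P *m sel S') by rewrite -subprincE.
have vn0 : c - K *m (invmx ((sel S)^T *m P *m sel S) *m (sel S)^T *m P *m ea) != 0.
  apply/eqP => /matrixP /(_ li 0); rewrite !mxE eqxx /=.
  rewrite big1 => [|k _]; last first.
    rewrite !mxE; suff -> : (li == wi k) = false by rewrite mul0r.
    by apply/negbTE; rewrite -val_eqE /= neq_ltn ltn_ord orbT.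
  by rewrite subr0 => /eqP; rewrite oner_eq0.
move: (proj_update PxxT EE eaE E'E Uc PD' vn0) => /= [dpos wPw Pe].
set w := ea - Proj P (sel S) *m P *m ea in dpos wPw Pe *.
have wE : w = ea - Proj P (sel S) *m P *m ea by [].
clearbody w.
have qE : q = P *m w.
  by rewrite /q colE QxxE wE mulmxBl mulmxBr !mulmxA.
have qT : q^T = w^T *m P by rewrite qE trmx_mul PxxT.
have dE : (w^T *m P *m w) 0 0 = q a 0.
  by rewrite wPw -qT /ea -colE !mxE.
rewrite dE in dpos Pe.
have wPy : w^T *m Pxy X Y = row a (Qxy X Y lam S).
  rewrite rowE QxyE wE linearB /= !trmx_mul PxxT ProjT ?PxxT // /ea trmx_delta.
  by rewrite mulmxBl mulmxBr !mulmxA.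
split => //.
  rewrite !QxxE Pe mulmxDr mulmxDl opprD addrA -scalemxAr -scalemxAl.
  by rewrite qE trmx_mul PxxT !mulmxA.
rewrite -wPy !QxyE Pe mulmxDr mulmxDl opprD addrA -scalemxAr -scalemxAl.
by rewrite qE !mulmxA.
Qed.

Lemma castmx_mulT n1 n2 (e : n1 = n2) p r (A : 'M[R]_(p, n1)) (B : 'M[R]_(r, n1)) :
  castmx (erefl p, e) A *m (castmx (erefl r, e) B)^T = A *m B^T.
Proof. by case: n2 / e; rewrite !castmx_id. Qed.

Lemma mulT_row n1 p r (A : 'M[R]_(p, n1)) (B : 'M[R]_(r, n1)) (x : 'I_r) :
  A *m (row x B)^T = col x (A *m B^T).
Proof. by rewrite colE -mulmxA -colE tr_row. Qed.

Lemma delta_eq n (Xi : 'M[R]_(N, n)) S a : Xi *m Xi^T = P - Qxx X lam S ->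
  X *m (row a X)^T + lam *: col a 1%:M - Xi *m (row a Xi)^T = col a (Qxx X lam S).
Proof.
move=> h; rewrite !mulT_row h !colE mul1mx mulmxBl /Pxx mulmxDl mul_scalar_mx.
by rewrite opprB addrC subrK.
Qed.

Lemma th_eq n (Xi : 'M[R]_(N, n)) (Th : 'M[R]_(Ny, n)) S a :
  Xi *m Th^T = Pxy X Y - Qxy X Y lam S ->
  (Y *m (row a X)^T - Th *m (row a Xi)^T)^T = row a (Qxy X Y lam S).
Proof.
move=> h; rewrite linearB /= !trmx_mul !trmxK -!row_mul h /Pxy !rowE mulmxBr.
by rewrite opprB addrC subrK.
Qed.

Lemma XT_inv S : (forall j, (j <= size S)%N -> posdef (subprinc (take j S) P)) ->
  (XTrev X Y lam (rev S)).1 *m (XTrev X Y lam (rev S)).1^T = P - Qxx X lam S /\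
  (XTrev X Y lam (rev S)).1 *m (XTrev X Y lam (rev S)).2^T = Pxy X Y - Qxy X Y lam S.
Proof.
elim/last_ind: S => [|S a IH] hpd.
  rewrite /= !mul0mx QxxE QxyE ProjE.
  have -> : sel [::] = 0 by apply/matrixP => i [].
  by rewrite !mul0mx !mulmx0 !mul0mx !subr0 !subrr.
have hS j : (j <= size S)%N -> posdef (subprinc (take j S) P).
  move=> hj; have e : take j (rcons S a) = take j S by rewrite -cats1 takel_cat.
  by rewrite -e; apply: hpd; rewrite size_rcons; exact: leqW.
have [IH1 IH2] := IH hS.
have Uc : subprinc S P \in unitmx.
  by apply: posdef_unit; have := hS (size S) (leqnn _); rewrite take_size.
have PD : posdef (subprinc (rcons S a) P).
  by have := hpd (size (rcons S a)) (leqnn _); rewrite take_size.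
have [qpos EQ1 EQ2] := Q_update Uc PD.
rewrite rev_rcons /= !castmx_mulT !tr_row_mx !mul_row_col.
set Xi := (XTrev X Y lam (rev S)).1 in IH1 IH2 *.
set Th := (XTrev X Y lam (rev S)).2 in IH1 IH2 *.
rewrite (delta_eq a IH1) IH1 IH2 EQ1 EQ2.
set q := col a (Qxx X lam S) in qpos *.
have cc : (Num.sqrt (q a 0))^-1 * (Num.sqrt (q a 0))^-1 = (q a 0)^-1.
  by rewrite -invfM -expr2 sqr_sqrtr // ltW.
rewrite !linearZ /= (th_eq a IH2) -!scalemxAl.
by rewrite !scalerA cc !scalerN !opprD !opprK !addrA.
Qed.

End Conc.

Lemma final_alg (R : rcfType) n (Qi Qa : 'rV[R]_n) (qi qa c : R) :
  c ^+ 2 = qa -> 0 < qa ->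
  sqnorm (Qi - qa^-1 *: (qi *: Qa))^T =
  sqnorm Qi^T - (c^-1 * qi) * (2 * (Qi *m (c^-1 *: Qa^T)) 0 0
                               - sqnorm (c^-1 *: Qa^T) * (c^-1 * qi)).
Proof.
move=> hc hq.
have cn0 : c != 0 by apply/eqP => c0; move: hq; rewrite -hc c0 expr0n /= ltxx.
rewrite /sqnorm !mxE mulr_sumr mulr_suml -sumrB mulr_sumr -sumrB.
apply: eq_bigr => j _; rewrite !mxE -hc.
field; exact: cn0.
Qed.

Unset Implicit Arguments.

(* k : 'I_p is 0-based: it stands for the paper's index k+1 in {1,...,p}.
   take k s = \bar S_{k-1}, take k.+1 s = \bar S_k, tnth s k = \bar s_k. *)
Theorem theorem2 (R : rcfType) (N Ny M p : nat)
  (X : 'M[R]_(N, M)) (Y : 'M[R]_(Ny, M)) (lam : R) (s : p.-tuple 'I_N) :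
  (p <= N)%N -> 0 <= lam -> greedy X Y lam s ->
  forall (k : 'I_p) (i : 'I_N),
    feasible X lam (take k s) i ->
    let Xi := (XiTh X Y lam (take k s)).1 in
    let Th := (XiTh X Y lam (take k s)).2 in
    let xi := (xi_theta X Y lam Xi Th (tnth s k)).1 in
    let th := (xi_theta X Y lam Xi Th (tnth s k)).2 in
    fval X Y lam (take k.+1 s) i
      = fval X Y lam (take k s) i
        - xi i 0 * (2 * (row i X *m Y^T *m th) 0 0
                    - 2 * (row i Xi *m Th^T *m th) 0 0
                    - sqnorm th * xi i 0)
    /\ gval X lam (take k.+1 s) i = gval X lam (take k s) i - xi i 0 * xi i 0.
Proof.
move=> _ _ hg k i _ Xi Th xi th.
have ks : (k < size s)%N by rewrite size_tuple ltn_ord.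
have eS : take k.+1 s = rcons (take k s) (tnth s k).
  by rewrite (take_nth (tnth s k)) // -tnth_nth.
have hpre j : (j <= p)%N -> posdef (subprinc (take j s) (Pxx X lam)).
  case: j => [|j] hj; first by rewrite take0; apply: posdef0.
  have [[_ h] _] := hg (Ordinal hj).
  rewrite (take_nth (tnth s (Ordinal hj))) ?size_tuple //.
  by rewrite (tnth_nth (tnth s (Ordinal hj))) /= in h.
have hS j : (j <= size (take k s))%N -> posdef (subprinc (take j (take k s)) (Pxx X lam)).
  rewrite size_takel ?(ltnW ks) // => hj; rewrite take_takel //.
  by apply: hpre; apply: leq_trans hj (ltnW (ltn_ord k)).
have [G H] := XT_inv Y hS.
have hXi : Xi *m Xi^T = Pxx X lam - Qxx X lam (take k s) by rewrite /Xi /XiTh /= castmx_mulT.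
have hTh : Xi *m Th^T = Pxy X Y - Qxy X Y lam (take k s) by rewrite /Xi /Th /XiTh /= castmx_mulT.
have Uc : subprinc (take k s) (Pxx X lam) \in unitmx.
  by apply: posdef_unit; have := hS _ (leqnn _); rewrite take_size.
have PD : posdef (subprinc (rcons (take k s) (tnth s k)) (Pxx X lam)).
  by have [[_ h] _] := hg k.
have [qpos EQ1 EQ2] := Q_update Y Uc PD.
rewrite eS /fval /gval EQ1 EQ2.
set a := tnth s k in xi th PD qpos EQ1 EQ2 *.
set q := col a (Qxx X lam (take k s)) in qpos EQ1 EQ2 *.
set c := Num.sqrt (q a 0).
have hc : c ^+ 2 = q a 0 by rewrite sqr_sqrtr // ltW.
have cn0 : c != 0 by apply/eqP => c0; move: qpos; rewrite -hc c0 expr0n /= ltxx.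
have cE : c = Num.sqrt (q a 0) by [].
clearbody c.
have xiE : xi = c^-1 *: q by rewrite /xi /xi_theta /= (delta_eq a hXi) cE.
have thE : th = c^-1 *: (row a (Qxy X Y lam (take k s)))^T.
  by rewrite /th /xi_theta /= (delta_eq a hXi) -(th_eq a hTh) trmxK cE.
have e1 (v : 'cV_Ny) : (row i X *m Y^T *m v) 0 0 - (row i Xi *m Th^T *m v) 0 0
    = (row i (Qxy X Y lam (take k s)) *m v) 0 0.
  have -> : row i (Qxy X Y lam (take k s)) = row i X *m Y^T - row i Xi *m Th^T.
    move: hTh; generalize (Qxy X Y lam (take k s)) => Qy hT.
    rewrite -!row_mul hT linearB /= opprB addrC /Pxy subrK. reflexivity.
  by rewrite mulmxBl !mxE.
split.
  rewrite -mulrBr e1.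
  have rq : row i (q *m row a (Qxy X Y lam (take k s))) = q i 0 *: row a (Qxy X Y lam (take k s)).
    by rewrite row_mul [row i q]mx11_scalar mul_scalar_mx mxE.
  rewrite linearB /= linearZ /= rq xiE thE [(c^-1 *: q) i 0]mxE.
  exact: final_alg.
rewrite xiE; move: hc; rewrite /q; clear -cn0.
generalize (Qxx X lam (take k s)) => Q hc.
rewrite !mxE in hc; rewrite !mxE big_ord1 !mxE -hc.
by field.
Qed.
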